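(* For any two positive integers $l$ and $s$ with $l \geq 2$, there exists a hypergraph $\mathcal{F}$ (with $s < |e|$ for every hyperedge $e$ of $\mathcal{F}$) such that $$\chi\left({\rm KG}^2(\mathcal{F}, s)\right) = l \quad \text{and} \quad {\rm ecd}^2(\mathcal{F}, s) = l + s.$$
   Context: A hypergraph $\mathcal{F}$ consists of a finite vertex set $V(\mathcal{F})$ and a set $E(\mathcal{F}) \subseteq 2^{V(\mathcal{F})} \setminus \{\varnothing\}$ of hyperedges. For an integer $r \geq 2$ and a nonnegative integer $s$ with $s < |e|$ for every hyperedge $e$ of $\mathcal{F}$, the generalized Kneser hypergraph ${\rm KG}^r(\mathcal{F}, s)$ is the $r$-uniform hypergraph whose vertex set is $E(\mathcal{F})$, in which $r$ distinct hyperedges $e_1, \dots, e_r$ of $\mathcal{F}$ form a hyperedge whenever $|e_i \cap e_j| \leq s$ for all distinct $i, j \in \{1, \dots, r\}$. Its chromatic number $\chi$ is the minimum size of a set $C$ admitting a map $f : E(\mathcal{F}) \to C$ such that no hyperedge of ${\rm KG}^r(\mathcal{F}, s)$ is monochromatic (for $r = 2$ this is the ordinary chromatic number of the graph). For sets $A, B$ and a nonnegative integer $s$, write $A \subseteq_s B$ if $|A \setminus B| \leq s$. The $s$-th equitable $r$-colorability defect ${\rm ecd}^r(\mathcal{F}, s)$ is the minimum cardinality of a set $X_0 \subseteq V(\mathcal{F})$ for which there is a partition $\{X_1, \dots, X_r\}$ of $V(\mathcal{F}) \setminus X_0$ (parts may be empty) such that $\big||X_i| - |X_j|\big| \leq 1$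 for all $1 \leq i < j \leq r$, and $e \not\subseteq_s X_i$ for every hyperedge $e \in E(\mathcal{F})$ and every $i \in \{1, \dots, r\}$. *)

(* Defs.v *)
From mathcomp Require Import all_boot.
Set Implicit Arguments. Unset Strict Implicit. Unset Printing Implicit Defensive.

(* A hypergraph on a finite vertex type V: a set E of nonempty hyperedges.
   (The vertex set V(F) is the whole finite type V.) *)
Definition hypergraph (V : finType) (E : {set {set V}}) : Prop :=
  set0 \notin E.

Definition edges_larger (V : finType) (E : {set {set V}}) (s : nat) : Prop :=
  forall e, e \in E -> s < #|e|.

Definition KG2_proper_coloring (V : finType) (E : {set {set V}}) (s k : nat)
  (f : {set V} -> 'I_k) : Prop :=
  forall e1 e2, e1 \in E -> e2 \in E -> e1 != e2 ->
    #|e1 :&: e2| <= s -> f e1 != f e2.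

Definition KG2_colorable (V : finType) (E : {set {set V}}) (s k : nat) : Prop :=
  exists f : {set V} -> 'I_k, KG2_proper_coloring E s f.

Definition chi_KG2_eq (V : finType) (E : {set {set V}}) (s k : nat) : Prop :=
  KG2_colorable E s k /\ forall k', KG2_colorable E s k' -> k <= k'.

Definition subset_s (V : finType) (s : nat) (A B : {set V}) : bool :=
  #|A :\: B| <= s.

(* X0 is admissible for ecd^2(F,s): there is a partition {X1,X2} of V \ X0
   (parts may be empty) with ||X1|-|X2|| <= 1 and no e \subseteq_s Xi. *)
Definition ecd2_admissible (V : finType) (E : {set {set V}}) (s : nat)
  (X0 : {set V}) : Prop :=
  exists X1 X2 : {set V},
    [/\ [disjoint X1 & X2], X1 :|: X2 = ~: X0,
        #|X1| <= #|X2|.+1 /\ #|X2| <= #|X1|.+1 &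
        forall e, e \in E -> ~~ subset_s s e X1 /\ ~~ subset_s s e X2].

Definition ecd2_eq (V : finType) (E : {set {set V}}) (s m : nat) : Prop :=
  (exists X0, ecd2_admissible E s X0 /\ #|X0| = m) /\
  forall X0, ecd2_admissible E s X0 -> m <= #|X0|.

(* Main.v *)
Require Import Defs.
From mathcomp Require Import all_boot.
Set Implicit Arguments. Unset Strict Implicit. Unset Printing Implicit Defensive.

Section Constr.
Variables s l : nat.

Definition Cc : {set 'I_(s+l)} := [set lshift l i | i : 'I_s].
Definition gg (j : 'I_l) : {set 'I_(s+l)} := rshift s j |: Cc.
Definition EE := [set gg j | j : 'I_l].

Lemma rshift_notC j : rshift s j \notin Cc.
Proof.
apply/imsetP => [[i _ /(congr1 val) /= h]].
by move: (ltn_ord i); rewrite -h ltnNge leq_addr.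
Qed.

Lemma card_C : #|Cc| = s.
Proof. by rewrite card_imset ?card_ord //; apply: lshift_inj. Qed.

Lemma card_g j : #|gg j| = s.+1.
Proof. by rewrite cardsU1 rshift_notC card_C. Qed.

Lemma g_inj : injective gg.
Proof.
move=> j1 j2 h.
have : rshift s j1 \in gg j2 by rewrite -h setU11.
rewrite in_setU1 (negbTE (rshift_notC _)) orbF => /eqP; apply: rshift_inj.
Qed.

Lemma inter j1 j2 : j1 != j2 -> #|gg j1 :&: gg j2| <= s.
Proof.
move=> ne; apply: (leq_trans _ (eq_leq card_C)); apply: subset_leq_card; apply/subsetP => x.
rewrite inE !in_setU1 => /andP[/orP[/eqP -> | //] /orP[/eqP /rshift_inj h | //]].
  by rewrite h eqxx in ne.
Qed.

Lemma cover (j0 : 'I_l) x : exists j, x \in gg j.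
Proof.
case: (splitP x) => [i hi | k hk].
  exists j0; rewrite in_setU1; apply/orP; right; apply/imsetP; exists i => //.
  by apply: val_inj.
exists k; rewrite in_setU1; apply/orP; left; apply/eqP; by apply: val_inj.
Qed.

Lemma empty_X (j0 : 'I_l) (X : {set 'I_(s+l)}) :
  (forall j, ~~ subset_s s (gg j) X) -> X = set0.
Proof.
move=> H; apply/setP => x; rewrite inE; apply/negP => xX.
case: (cover j0 x) => j xg.
have := H j; rewrite /subset_s -ltnNge => hlt.
have h1 : #|gg j :\ x| = s.
  by have := cardsD1 x (gg j); rewrite xg card_g add1n => -[].
have : #|gg j :\: X| <= #|gg j :\ x|.
  apply: subset_leq_card; apply/subsetP => y; rewrite !inE => /andP[yX yg].
  by rewrite yg andbT; apply: contraNneq yX => ->.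
by rewrite h1 leqNgt hlt.
Qed.

Lemma gE j : gg j \in EE.
Proof. by apply/imsetP; exists j. Qed.

End Constr.

Theorem theorem2 (l s : nat) (hl : 2 <= l) (hs : 0 < s) :
  exists (V : finType) (E : {set {set V}}),
    [/\ hypergraph E, edges_larger E s,
        chi_KG2_eq E s l & ecd2_eq E s (l + s)].
Proof.
have l0 : 0 < l by apply: leq_trans hl.
pose j0 : 'I_l := Ordinal l0.
exists ('I_(s+l) : finType), (EE s l); split.
- apply/negP => /imsetP [j _ h]; have := card_g s j; by rewrite -h cards0.
- by move=> e /imsetP[j _ ->]; rewrite (card_g s).
- split.
  + exists (fun e => odflt j0 [pick j | gg s j == e]).
    have fE j : [pick j' | gg s j' == gg s j] = Some j.
      case: pickP => [j' /eqP /(@g_inj s _) -> // | /(_ j)]; by rewrite eqxx.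
    move=> e1 e2 /imsetP[j1 _ ->] /imsetP[j2 _ ->] ne _.
    rewrite !fE /=; apply: contraNneq ne => ->; by [].
  + move=> k [f hf].
    have inj : injective (fun j => f (gg s j)).
      move=> j1 j2 h; apply/eqP; apply/negPn/negP => ne.
      have ne' : gg s j1 != gg s j2 by apply: contra ne => /eqP /(@g_inj s _) ->.
      have := hf (gg s j1) (gg s j2) (gE s j1) (gE s j2) ne' (inter s ne).
      by rewrite h eqxx.
    by have := leq_card _ inj; rewrite !card_ord.
- split.
  + exists setT; split; last by rewrite cardsT card_ord addnC.
    exists set0, set0; split.
    * by rewrite -setI_eq0 setI0.
    * by rewrite setU0 setCT.
    * by rewrite cards0.
    * move=> e /imsetP[j _ ->]; rewrite /subset_s setD0 (card_g s) ltnn; by split.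
  + move=> X0 [X1 [X2 [dis U _ H]]].
    have H1 : X1 = set0.
      apply: (@empty_X s l j0 X1) => j; exact: (H _ (gE s j)).1.
    have H2 : X2 = set0.
      apply: (@empty_X s l j0 X2) => j; exact: (H _ (gE s j)).2.
    rewrite H1 H2 setU0 in U.
    have -> : X0 = setT by rewrite -[X0]setCK -U setC0.
    by rewrite cardsT card_ord addnC.
Qed.
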